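(* Let $n\ge1$ and $3\le l\le d$. Every $w\in\mathbb{R}^{nd}$ satisfying $y\,(w\cdot x)\ge1$ for all $(x,y)$ in the support of $\mathcal{D}$ has $\|w\|^2\ge n$. In particular, $\hat w=\arg\min\{\|w\|^2 : w\in\mathbb{R}^{nd},\ y\,(w\cdot x)\ge1 \text{ for all } (x,y)\text{ in the support of }\mathcal{D}\}$ satisfies $\|\hat w\|^2\ge n$.
   Context: Let $o_1,\dots,o_l\in\mathbb{R}^d$ be orthonormal vectors. Inputs are $x=(x[1],\dots,x[n])\in\mathbb{R}^{nd}$ with blocks $x[j]\in\mathbb{R}^d$; $w\cdot x$ is the standard inner product on $\mathbb{R}^{nd}$. The distribution $\mathcal{D}$ on $\mathbb{R}^{nd}\times\{\pm1\}$: $y$ uniform on $\{\pm1\}$; given $y=1$, an index $j_+$ uniform on $\{1,\dots,n\}$ is drawn, $x[j_+]=o_1$, and for each $j\ne j_+$ independently $x[j]=o_{i_j}$ with $i_j$ uniform on $\{3,\dots,l\}$; given $y=-1$, the same with $o_2$ instead of $o_1$. *)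

(* Defs.v *)
From HB Require Import structures.
From mathcomp Require Import all_boot all_order all_algebra.
Set Implicit Arguments. Unset Strict Implicit. Unset Printing Implicit Defensive.
Import Order.TTheory GRing.Theory Num.Theory.
Local Open Scope ring_scope.

Definition dotv (R : realFieldType) (d : nat) (u v : 'rV[R]_d) : R :=
  \sum_(k < d) u 0 k * v 0 k.

(* o_1, ..., o_l (1-based indices, as in the paper) are orthonormal in R^d *)
Definition orthonormal_family (R : realFieldType) (d l : nat)
    (o : nat -> 'rV[R]_d) : Prop :=
  forall i j, (1 <= i <= l)%N -> (1 <= j <= l)%N ->
    dotv (o i) (o j) = (if i == j then 1 else 0).

(* An element x of R^{nd} is given by its n blocks x[1..n] in R^d
   (block j+1 of the paper is index j : 'I_n here). *)
Definition blockvec (R : realFieldType) (n d : nat) := 'I_n -> 'rV[R]_d.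

Definition bdot (R : realFieldType) (n d : nat) (w x : blockvec R n d) : R :=
  \sum_(j < n) dotv (w j) (x j).

Definition bnorm2 (R : realFieldType) (n d : nat) (w : blockvec R n d) : R :=
  bdot w w.

Definition pattern (R : realFieldType) (n d l : nat) (o : nat -> 'rV[R]_d)
    (a : nat) (x : blockvec R n d) : Prop :=
  exists jp : 'I_n, x jp = o a /\
    forall j : 'I_n, j != jp -> exists i, (3 <= i <= l)%N /\ x j = o i.

Definition in_support (R : realFieldType) (n d l : nat) (o : nat -> 'rV[R]_d)
    (x : blockvec R n d) (y : R) : Prop :=
  (y = 1 /\ pattern l o 1 x) \/ (y = -1 /\ pattern l o 2 x).

Definition feasible (R : realFieldType) (n d l : nat) (o : nat -> 'rV[R]_d)
    (w : blockvec R n d) : Prop :=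
  forall (x : blockvec R n d) (y : R), in_support l o x y -> 1 <= y * bdot w x.

(* Main.v *)
Require Import Defs.
From HB Require Import structures.
From mathcomp Require Import all_boot all_order all_algebra.
From mathcomp Require Import ring lra zify.
Import Order.TTheory GRing.Theory Num.Theory.
Local Open Scope ring_scope.

Lemma bessel2 (R : realFieldType) (d : nat) (w p q : 'rV[R]_d) :
  dotv p p = 1 -> dotv q q = 1 -> dotv p q = 0 ->
  (dotv w p)^+2 + (dotv w q)^+2 <= dotv w w.
Proof.
move=> Hp Hq Hpq.
have E : forall a b : R, \sum_(k < d) (w 0 k - a * p 0 k - b * q 0 k) ^+ 2 =
  dotv w w - (2 * a) * dotv w p - (2 * b) * dotv w q + (a * a) * dotv p p
  + (2 * a * b) * dotv p q + (b * b) * dotv q q.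
  move=> a b; rewrite /dotv !mulr_sumr -!sumrN -!big_split /=.
  by apply: eq_bigr => k _; ring.
have H0 : 0 <= \sum_(k < d) (w 0 k - dotv w p * p 0 k - dotv w q * q 0 k) ^+ 2.
  by apply: sumr_ge0 => k _; apply: sqr_ge0.
move: H0; rewrite E Hp Hq Hpq; lra.
Qed.

Lemma dotv_ge0 (R : realFieldType) (d : nat) (w : 'rV[R]_d) : 0 <= dotv w w.
Proof. by apply: sumr_ge0 => k _; rewrite -expr2 sqr_ge0. Qed.

Lemma part1 (R : realFieldType) (n d l : nat) (o : nat -> 'rV[R]_d) :
  (3 <= l)%N -> orthonormal_family l o ->
  forall w : blockvec R n d, feasible l o w -> n%:R <= bnorm2 w.
Proof.
move=> Hl Ho w Hf.
have H1 : dotv (o 1%N) (o 1%N) = 1 by rewrite Ho //; apply/andP; split=> //; lia.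
have H2 : dotv (o 2%N) (o 2%N) = 1 by rewrite Ho //; apply/andP; split=> //; lia.
have H12 : dotv (o 1%N) (o 2%N) = 0 by rewrite Ho //; apply/andP; split=> //; lia.
have Hj : forall jp : 'I_n, 2 <= dotv (w jp) (w jp).
  move=> jp.
  pose x s : blockvec R n d := fun j => if j == jp then o s else o 3%N.
  have Pat : forall s, pattern l o s (x s).
    move=> s; exists jp; split; first by rewrite /x eqxx.
    move=> j /negbTE Hj; exists 3%N; split; first by apply/andP; split.
    by rewrite /x Hj.
  have F1 := Hf (x 1%N) 1 (or_introl (conj erefl (Pat 1%N))).
  have F2 := Hf (x 2%N) (-1) (or_intror (conj erefl (Pat 2%N))).
  have D : bdot w (x 1%N) - bdot w (x 2%N) =
           dotv (w jp) (o 1%N) - dotv (w jp) (o 2%N).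
    rewrite /bdot (bigD1 jp) //= (bigD1 jp (P:=predT)) //= /x eqxx.
    rewrite (eq_bigr (fun j => dotv (w j) (o 3%N))); last first.
      by move=> j /negbTE ->.
    rewrite [X in _ - (_ + X)](eq_bigr (fun j => dotv (w j) (o 3%N))); last first.
      by move=> j /negbTE ->.
    ring.
  have B := @bessel2 R d (w jp) _ _ H1 H2 H12.
  move: F1 F2 B; rewrite mul1r mulN1r.
  move: D; set A := bdot _ _; set C := bdot _ _.
  set a := dotv _ (o 1%N); set b := dotv _ (o 2%N).
  move=> D F1 F2 B.
  have Hab : 2 <= a - b by rewrite -D; lra.
  have S1 : 0 <= (a + b) ^+ 2 by apply: sqr_ge0.
  have S2 : 4 <= (a - b) ^+ 2.
    have -> : (4 : R) = 2 ^+ 2 by rewrite expr2; ring.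
    rewrite ler_sqr ?nnegrE //; lra.
  move: S1 S2 B; rewrite !expr2; nra.
rewrite /bnorm2 /bdot.
apply: le_trans (_ : \sum_(j < n) (1 : R) <= _).
  by rewrite sumr_const card_ord.
apply: ler_sum => j _; have := Hj j; lra.
Qed.

Theorem proposition6p1 (R : realFieldType) (n d l : nat) (o : nat -> 'rV[R]_d) :
  (1 <= n)%N -> (3 <= l)%N -> (l <= d)%N ->
  orthonormal_family l o ->
  (forall w : blockvec R n d, feasible l o w -> n%:R <= bnorm2 w) /\
  (forall what : blockvec R n d,
     feasible l o what ->
     (forall w : blockvec R n d, feasible l o w -> bnorm2 what <= bnorm2 w) ->
     n%:R <= bnorm2 what).
Proof.
move=> _ Hl _ Ho; split; first exact: part1.
by move=> wh Hf _; exact: part1 Hf.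
Qed.
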